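(* For all real $0\le a\le b\le 1$ and all $\epsilon\in(0,\tfrac12)$, $$\frac{(\sqrt b+\sqrt a)^{2(1+\epsilon)}+(\sqrt b-\sqrt a)^{2(1+\epsilon)}}{2}-a^{1+\epsilon}-b^{1+\epsilon}\le (3\epsilon+2\epsilon^2)a+(b^\epsilon-a^\epsilon)a.$$ *)

(* Defs.v *)
From Stdlib Require Import Reals.
Open Scope R_scope.

(* Real power x^y for x >= 0 and y > 0, with the convention 0^y = 0.
   (Stdlib's Rpower x y = exp (y * ln x) gives 1 at x = 0, so we patch 0.) *)
Definition rpow (x y : R) : R :=
  if Req_EM_T x 0 then 0 else Rpower x y.

(* Main.v *)
Require Import Defs.
From Stdlib Require Import Reals Lra.
From Coquelicot Require Import Coquelicot.
Open Scope R_scope.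

Lemma ln_0 : ln 0 = 0.
Proof.
unfold ln.
destruct (Rlt_dec 0 0) as [h|h].
- exfalso; lra.
- reflexivity.
Qed.

Definition pw (p s : R) : R := Rabs s * exp ((p-1) * ln (Rabs s)).

Lemma pw_pos p s : 0 < s -> pw p s = exp (p * ln s).
Proof.
  intros Hs. unfold pw. rewrite Rabs_pos_eq by lra.
  rewrite <- (exp_ln s) at 1 by lra. rewrite <- exp_plus. f_equal. ring.
Qed.

Lemma pw0 p : pw p 0 = 0.
Proof. unfold pw. rewrite Rabs_R0. ring. Qed.

Lemma pw_nonneg p s : 0 <= pw p s.
Proof. unfold pw. apply Rmult_le_pos. apply Rabs_pos. left; apply exp_pos. Qed.

Lemma pw_derive p s : 0 < s -> is_derive (pw p) s (p * pw (p-1) s).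
Proof.
  intros Hs. unfold pw. auto_derive.
  - rewrite Rabs_pos_eq by lra. repeat split; lra.
  - rewrite Rabs_pos_eq by lra. rewrite sign_eq_1 by lra.
    assert (E : exp ((p - 1) * ln s) = s * exp ((p - 1 - 1) * ln s)).
    { rewrite <- (exp_ln s) at 2 by lra. rewrite <- exp_plus. f_equal; ring. }
    rewrite E. field. lra.
Qed.

Lemma pw_cont p s : 1 < p -> continuity_pt (pw p) s.
Proof.
  intros Hp. destruct (Req_dec s 0) as [->|Hs].
  - intros eps Heps. exists (Rmin 1 eps). split.
    + apply Rmin_pos; lra.
    + intros x [_ Hx]. unfold dist in *; simpl in *; unfold R_dist in *.
      rewrite pw0. rewrite Rminus_0_r in *. rewrite Rabs_pos_eq by apply pw_nonneg.
      assert (Hx1 : Rabs x < 1) by (eapply Rlt_le_trans; [exact Hx| apply Rmin_l]).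
      assert (Hx2 : Rabs x < eps) by (eapply Rlt_le_trans; [exact Hx| apply Rmin_r]).
      unfold pw.
      assert (exp ((p - 1) * ln (Rabs x)) <= 1).
      { destruct (Rle_lt_or_eq_dec 0 (p-1)) as [?|?]; try lra.
        assert (ln (Rabs x) <= 0).
        { destruct (Req_dec (Rabs x) 0) as [E|E]. rewrite E, ln_0. lra.
          rewrite <- ln_1. apply ln_le. pose proof (Rabs_pos x). lra. lra. }
        assert (h : (p-1) * ln (Rabs x) <= 0) by nra.
        apply Rle_trans with (exp 0); [|rewrite exp_0; lra]. destruct h as [h|h]. left; apply exp_increasing; lra. rewrite h; lra. }
      pose proof (Rabs_pos x). nra.
  - apply continuity_pt_filterlim. apply (ex_derive_continuous (K:=R_AbsRing) (V:=R_NormedModule)).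
    unfold pw. auto_derive. repeat split; auto. apply Rabs_pos_lt; auto.
Qed.

Lemma exp_mono a b : a <= b -> exp a <= exp b.
Proof. intros [h|h]. left; apply exp_increasing; auto. rewrite h; lra. Qed.

Lemma pw_tangent r y u : 0 < r < 1 -> 0 < y -> 0 <= u ->
  pw r u <= (r*u + (1-r)*y) * exp ((r-1) * ln y).
Proof.
  intros Hr Hy [Hu|Hu].
  - set (A := r*u + (1-r)*y).
    assert (HA : 0 < A) by (unfold A; nra).
    rewrite pw_pos by lra.
    assert (L : forall z, 0 < z -> ln z <= z - 1).
    { intros z Hz. pose proof (exp_ineq1_le (ln z)). rewrite exp_ln in H; lra. }
    pose proof (L (u/A) ltac:(apply Rdiv_lt_0_compat; lra)) as L1.
    pose proof (L (y/A) ltac:(apply Rdiv_lt_0_compat; lra)) as L2.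
    rewrite ln_div in L1, L2 by lra.
    assert (E : r * (u/A - 1) + (1-r) * (y/A - 1) = 0) by (unfold A in *; field; lra).
    assert (r * ln u <= ln A + (r-1) * ln y) by nra.
    rewrite <- (exp_ln A) at 1 by lra. rewrite <- exp_plus. apply exp_mono. lra.
  - subst u. rewrite pw0. apply Rmult_le_pos. nra. left; apply exp_pos.
Qed.

Lemma pw_concave r y x : 0 < r < 1 -> 0 < y -> 0 <= x <= y ->
  pw r (y+x) + pw r (y-x) <= 2 * pw r y.
Proof.
  intros Hr Hy Hx.
  pose proof (pw_tangent r y (y+x) Hr Hy ltac:(lra)).
  pose proof (pw_tangent r y (y-x) Hr Hy ltac:(lra)).
  assert (pw r y = y * exp ((r-1) * ln y)).
  { rewrite pw_pos by lra. rewrite <- (exp_ln y) at 2 by lra. rewrite <- exp_plus. f_equal; ring. }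
  rewrite H1. nra.
Qed.

Lemma mono_helper (f df : R -> R) x : 0 <= x ->
  (forall c, 0 < c < x -> is_derive f c (df c)) ->
  (forall c, 0 <= c <= x -> continuity_pt f c) ->
  (forall c, 0 <= c <= x -> 0 <= df c) -> f 0 <= f x.
Proof.
  intros [Hx|Hx] Hd Hc Hdf; [|subst; lra].
  destruct (MVT_gen f 0 x df) as [c [Hc1 Hc2]].
  - rewrite Rmin_left, Rmax_right by lra. auto.
  - rewrite Rmin_left, Rmax_right by lra. auto.
  - rewrite Rmin_left, Rmax_right in Hc1 by lra.
    pose proof (Hdf c Hc1). nra.
Qed.

Lemma is_derive_eq (f : R -> R) x l l' : is_derive f x l -> l = l' -> is_derive f x l'.
Proof. intros H ->; exact H. Qed.

Lemma pw_cont_comp p (g : R -> R) c : 1 < p -> continuity_pt g c -> continuity_pt (fun t => pw p (g t)) c.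
Proof. intros Hp Hg. apply (continuity_pt_comp g (pw p)); auto. apply pw_cont; auto. Qed.


Lemma pw_derive_plus p y c : 0 < y + c -> is_derive (fun t => pw p (y + t)) c (p * pw (p-1) (y+c)).
Proof.
  intros H. eapply is_derive_eq.
  apply (is_derive_comp (pw p) (fun t => y + t) c (p * pw (p-1) (y+c)) 1). apply pw_derive; auto.
  auto_derive; auto.
  change (scal 1 (p * pw (p - 1) (y + c))) with (1 * (p * pw (p - 1) (y + c))). apply Rmult_1_l.
Qed.

Lemma pw_derive_minus p y c : 0 < y - c -> is_derive (fun t => pw p (y - t)) c (- (p * pw (p-1) (y-c))).
Proof.
  intros H. eapply is_derive_eq.
  apply (is_derive_comp (pw p) (fun t => y - t) c (p * pw (p-1) (y-c)) (-1)). apply pw_derive; auto.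
  auto_derive; auto.
  change (scal (-1) (p * pw (p - 1) (y - c))) with ((-1) * (p * pw (p - 1) (y - c))). match goal with |- ?a = ?b => change (@eq R a b) end; ring.
Qed.

Lemma cont_lin (k : R) c : continuity_pt (fun t => k * t) c.
Proof. apply continuity_pt_mult. apply continuity_pt_const; intros ? ?; auto. apply continuity_pt_id. Qed.

Lemma cont_shift (y : R) c : continuity_pt (fun t => y + t) c.
Proof. apply continuity_pt_plus. apply continuity_pt_const; intros ? ?; auto. apply continuity_pt_id. Qed.

Lemma cont_shiftm (y : R) c : continuity_pt (fun t => y - t) c.
Proof. apply continuity_pt_minus. apply continuity_pt_const; intros ? ?; auto. apply continuity_pt_id. Qed.

Lemma pw_B m y x : 1 < m < 2 -> 0 < y -> 0 <= x <= y ->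
  pw m (y+x) - pw m (y-x) <= 2*m*x*pw (m-1) y.
Proof.
  intros Hm Hy Hx.
  set (K := pw (m-1) y).
  assert (H := mono_helper (fun c => (2*m*K) * c - pw m (y+c) + pw m (y-c))
     (fun c => 2*m*K - m*pw(m-1)(y+c) - m*pw(m-1)(y-c)) x ltac:(lra)).
  simpl in H. replace (y+0) with y in H by ring. replace (y-0) with y in H by ring.
  enough (2 * m * K * 0 - pw m y + pw m y <= 2 * m * K * x - pw m (y + x) + pw m (y - x)) by lra.
  apply H.
  - intros c Hc. eapply is_derive_eq.
    apply (is_derive_plus (fun c => (2*m*K) * c - pw m (y+c)) (fun c => pw m (y-c))).
    apply (is_derive_minus (fun c => (2*m*K) * c) (fun c => pw m (y+c))).
    auto_derive; auto. apply pw_derive_plus; lra. apply pw_derive_minus; lra.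
    change (2 * m * K * 1 - m * pw (m - 1) (y + c) + - (m * pw (m - 1) (y - c)) =
            2 * m * K - m * pw (m - 1) (y + c) - m * pw (m - 1) (y - c)). ring.
  - intros c Hc. apply continuity_pt_plus. apply continuity_pt_minus. apply cont_lin.
    apply pw_cont_comp. lra. apply cont_shift. apply pw_cont_comp. lra. apply cont_shiftm.
  - intros c Hc. pose proof (pw_concave (m-1) y c ltac:(lra) Hy ltac:(lra)). unfold K. nra.
Qed.

Lemma cont_sq (k : R) c : continuity_pt (fun t => k * (t * t)) c.
Proof. apply continuity_pt_mult. apply continuity_pt_const; intros ? ?; auto.
  apply continuity_pt_mult; apply continuity_pt_id. Qed.

Lemma pw_C q y x : 2 < q < 3 -> 0 < y -> 0 <= x <= y ->
  pw q (y+x) + pw q (y-x) <= 2 * pw q y + q*(q-1)*(x*x)*pw (q-2) y.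
Proof.
  intros Hq Hy Hx.
  set (K := pw (q-2) y).
  assert (H := mono_helper (fun c => (q*(q-1)*K) * (c*c) - pw q (y+c) - pw q (y-c))
     (fun c => q*(q-1)*K*(2*c) - q*pw(q-1)(y+c) + q*pw(q-1)(y-c)) x ltac:(lra)).
  simpl in H. replace (y+0) with y in H by ring. replace (y-0) with y in H by ring.
  enough (q*(q-1)*K * (0*0) - pw q y - pw q y <= q*(q-1)*K * (x*x) - pw q (y + x) - pw q (y - x)) by lra.
  apply H.
  - intros c Hc. eapply is_derive_eq.
    apply (is_derive_minus (fun c => (q*(q-1)*K) * (c*c) - pw q (y+c)) (fun c => pw q (y-c))).
    apply (is_derive_minus (fun c => (q*(q-1)*K) * (c*c)) (fun c => pw q (y+c))).
    auto_derive; auto. apply pw_derive_plus; lra. apply pw_derive_minus; lra.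
    change (q * (q - 1) * K * (1 * c + c * 1) - q * pw (q - 1) (y + c) - - (q * pw (q - 1) (y - c)) =
            q * (q - 1) * K * (2 * c) - q * pw (q - 1) (y + c) + q * pw (q - 1) (y - c)). ring.
  - intros c Hc. apply continuity_pt_minus. apply continuity_pt_minus. apply cont_sq.
    apply pw_cont_comp. lra. apply cont_shift. apply pw_cont_comp. lra. apply cont_shiftm.
  - intros c Hc. pose proof (pw_B (q-1) y c ltac:(lra) Hy ltac:(lra)).
    replace (q-1-1) with (q-2) in H0 by ring. fold K in H0. nra.
Qed.

Lemma rpow_pw s p : 0 <= s -> rpow s p = pw p s.
Proof.
  intros Hs. unfold rpow. destruct (Req_EM_T s 0) as [->|h].
  - rewrite pw0; auto.
  - rewrite pw_pos by lra. reflexivity.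
Qed.

Lemma rpow_sq x p : 0 <= x -> rpow (x*x) p = pw (2*p) x.
Proof.
  intros Hx. rewrite rpow_pw by nra. destruct (Req_dec x 0) as [->|h].
  - rewrite Rmult_0_r, !pw0; auto.
  - rewrite !pw_pos by nra. rewrite ln_mult by lra. f_equal; ring.
Qed.

Lemma rpow_succ a e : 0 <= a -> rpow a (1+e) = a * rpow a e.
Proof.
  intros Ha. unfold rpow. destruct (Req_EM_T a 0) as [->|h]. ring.
  rewrite Rpower_plus, Rpower_1 by lra. ring.
Qed.

Lemma rpow_le1 b e : 0 <= b <= 1 -> 0 < e -> rpow b e <= 1.
Proof.
  intros Hb He. unfold rpow. destruct (Req_EM_T b 0) as [->|h]. lra.
  unfold Rpower. rewrite <- exp_0. apply exp_mono.
  assert (ln b <= 0). { rewrite <- ln_1. apply ln_le; lra. } nra.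
Qed.

Lemma rpow_nonneg b e : 0 <= b -> 0 <= rpow b e.
Proof. intros. rewrite rpow_pw by auto. apply pw_nonneg. Qed.

Theorem lemma2p4 (a b eps : R) :
  0 <= a -> a <= b -> b <= 1 -> 0 < eps -> eps < 1/2 ->
  (rpow (sqrt b + sqrt a) (2 * (1 + eps)) + rpow (sqrt b - sqrt a) (2 * (1 + eps))) / 2
    - rpow a (1 + eps) - rpow b (1 + eps)
  <= (3 * eps + 2 * eps ^ 2) * a + (rpow b eps - rpow a eps) * a.
Proof.
  intros Ha Hab Hb He He2.
  destruct (Req_dec b 0) as [Hb0|Hb0].
  - assert (a = 0) by lra. subst a b. rewrite sqrt_0.
    replace (0+0) with 0 by ring. replace (0-0) with 0 by ring.
    rewrite !rpow_pw by lra. rewrite !pw0. lra.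
  - assert (Hy : 0 < sqrt b) by (apply sqrt_lt_R0; lra).
    assert (Hx : 0 <= sqrt a) by apply sqrt_pos.
    assert (Hxy : sqrt a <= sqrt b) by (apply sqrt_le_1_alt; lra).
    pose proof (pw_C (2*(1+eps)) (sqrt b) (sqrt a) ltac:(lra) Hy ltac:(lra)) as HC.
    rewrite (rpow_pw (sqrt b + sqrt a)), (rpow_pw (sqrt b - sqrt a)) by lra.
    rewrite (rpow_succ a), (rpow_succ b) by lra.
    assert (Eb : rpow b eps = pw (2*eps) (sqrt b)).
    { rewrite <- rpow_sq by lra. rewrite sqrt_sqrt by lra. auto. }
    assert (Eb2 : rpow b (1+eps) = pw (2*(1+eps)) (sqrt b)).
    { rewrite <- rpow_sq by lra. rewrite sqrt_sqrt by lra. auto. }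
    rewrite rpow_succ in Eb2 by lra.
    replace (2 * (1 + eps) - 2) with (2*eps) in HC by ring.
    rewrite <- Eb, <- Eb2 in HC. rewrite sqrt_sqrt in HC by lra.
    pose proof (rpow_le1 b eps ltac:(lra) He).
    pose proof (rpow_nonneg b eps ltac:(lra)).
    assert (0 <= (3*eps + 2*eps^2) * a * (1 - rpow b eps)).
    { apply Rmult_le_pos; [|lra]. apply Rmult_le_pos; nra. }
    nra.
Qed.
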